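(* Let $q=2^m$, let $k\in\mathbb{F}_q$ with $Tr(k)=1$, let $i\in\mathbb{F}_{q^2}\setminus\mathbb{F}_q$ with $i^2=i+k$, and let $\alpha=A+iB$, $\beta=C+iD$ with $A,B,C,D\in\mathbb{F}_q$ and $\alpha\beta\neq 0$. Then the following are equivalent: (i) $m$ is odd, $C=A+B+1$, $D=B$, $A^2+AB+B^2k+B=0$, and $B\neq 0$; (ii) $\beta=\alpha^{q-1}\in\mathbb{F}_{q^2}\setminus\mathbb{F}_q$, $Tr\left(1+\frac{1}{\alpha^{q+1}}\right)=0$, and $\alpha+\alpha^q=\beta+\beta^q$.
   Context: $Tr:\mathbb{F}_q\to\mathbb{F}_2$ is the absolute trace $Tr(z)=z+z^2+\cdots+z^{2^{m-1}}$. *)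

(* Defs.v *)
From HB Require Import structures.
From mathcomp Require Import all_boot all_order all_algebra all_field.
Set Implicit Arguments. Unset Strict Implicit. Unset Printing Implicit Defensive.
Import GRing.Theory.
Local Open Scope ring_scope.

(* L plays the role of F_{q^2}, q = 2^m; F_q is the subfield {x | x^q = x}. *)
Definition inFq (L : finFieldType) (m : nat) (x : L) : bool := x ^+ (2 ^ m) == x.

Definition Tr (L : finFieldType) (m : nat) (z : L) : L :=
  \sum_(j < m) z ^+ (2 ^ j).

(* Main.v *)
Require Import Defs.
From HB Require Import structures.
From mathcomp Require Import all_boot all_order all_algebra all_field.
From mathcomp Require Import ring.
Import GRing.Theory.
Local Open Scope ring_scope.

Lemma eq_by (L : fieldType) (a b c : L) : a - b = c -> c = 0 -> a = b.
Proof. by move=> h c0; apply/eqP; rewrite -subr_eq0 h c0. Qed.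

Section Aux.
Variable L : finFieldType.
Hypothesis two0 : 2 = 0 :> L.

Lemma add2 (x : L) : x + x = 0.
Proof. have -> : x + x = 2 * x by ring.
by rewrite two0 mul0r. Qed.

Lemma sq2 (x y : L) : (x + y) ^+ 2 = x ^+ 2 + y ^+ 2.
Proof. by apply: (@eq_by _ _ _ (2 * (x * y))); [ring | rewrite two0 mul0r]. Qed.

Lemma frobD n (x y : L) : (x + y) ^+ (2 ^ n) = x ^+ (2 ^ n) + y ^+ (2 ^ n).
Proof.
elim: n => [|n IH]; first by rewrite !expr1.
by rewrite expnSr !exprM IH sq2.
Qed.

Lemma TrD m (x y : L) : Tr m (x + y) = Tr m x + Tr m y.
Proof. by rewrite /Tr -big_split /=; apply: eq_bigr => j _; rewrite frobD. Qed.

Lemma Tr1 m : Tr m (1 : L) = m%:R.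
Proof.
rewrite /Tr (eq_bigr (fun _ => 1)); last by move=> j _; rewrite expr1n.
by rewrite sumr_const card_ord.
Qed.

Lemma Trsq m (t : L) : Tr m (t ^+ 2 + t) = t ^+ (2 ^ m) + t.
Proof.
elim: m => [|m IH]; first by rewrite /Tr big_ord0 expr1 add2.
rewrite /Tr big_ord_recr /= -/(Tr m _) IH frobD -exprM -expnS.
move: (t ^+ (2 ^ m.+1)) (t ^+ (2 ^ m)) => u v.
by apply: (@eq_by _ _ _ (v + v)); [ring | rewrite add2].
Qed.

Lemma natr2 m : m%:R = (odd m)%:R :> L.
Proof.
rewrite -{1}(odd_double_half m) natrD -muln2 natrM.
by rewrite (_ : 2%:R = 0) ?mulr0 ?addr0.
Qed.
End Aux.

Theorem proposition6 (L : finFieldType) (m : nat)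
  (hL : #|L| = ((2 ^ m) ^ 2)%N)
  (k i A B C D : L)
  (hk : inFq m k) (hTrk : Tr m k = 1)
  (hi : ~~ inFq m i) (hi2 : i ^+ 2 = i + k)
  (hA : inFq m A) (hB : inFq m B) (hC : inFq m C) (hD : inFq m D)
  (hab : (A + i * B) * (C + i * D) != 0) :
  let alpha := A + i * B in
  let beta := C + i * D in
  (odd m /\ C = A + B + 1 /\ D = B /\
   A ^+ 2 + A * B + B ^+ 2 * k + B = 0 /\ B != 0)
  <->
  (beta = alpha ^+ (2 ^ m - 1) /\ ~~ inFq m beta /\
   Tr m (1 + (alpha ^+ (2 ^ m + 1))^-1) = 0 /\
   alpha + alpha ^+ (2 ^ m) = beta + beta ^+ (2 ^ m)).
Proof.
move=> alpha beta.
have two0 : 2 = 0 :> L.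
  have h2 : (2 \in [pchar L])%N.
    by apply: (@card_finPcharP _ 2 (m * 2)) => //; rewrite hL -expnM.
  exact: (pcharf0 h2).
have hi2' : i ^+ 2 - i - k = 0 by rewrite hi2; ring.
set q := (2 ^ m)%N.
have q1 : (0 < q)%N by rewrite expn_gt0.
have fq (X : L) : inFq m X -> X ^+ q = X by move/eqP.
have fD (x y : L) : (x + y) ^+ q = x ^+ q + y ^+ q := @frobD L two0 m x y.
have fqD (X Y : L) : inFq m X -> inFq m Y -> inFq m (X + Y).
  by move=> hX hY; rewrite /inFq -/q fD !fq.
have fqM (X Y : L) : inFq m X -> inFq m Y -> inFq m (X * Y).
  by move=> hX hY; rewrite /inFq -/q exprMn !fq.
have iq : i ^+ q = i + 1.
  have h : (i ^+ q) ^+ 2 = i ^+ q + k.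
    by rewrite -exprM mulnC exprM hi2 fD (fq k hk).
  have : (i ^+ q - i) * (i ^+ q - i - 1) = 0.
    move: h; move: (i ^+ q) => j h.
    apply: (@eq_by _ _ _ (2 * (i ^+ 2 - i * j) + (j ^+ 2 - j - k) - (i ^+ 2 - i - k))).
      by ring.
    by rewrite two0 mul0r add0r hi2' subr0 h; ring.
  move/eqP; rewrite mulf_eq0 !subr_eq0 => /orP [/eqP h1|/eqP h1].
    by move: hi; rewrite /inFq -/q h1 eqxx.
  by rewrite -h1; ring.
have frob X Y : inFq m X -> inFq m Y -> (X + i * Y) ^+ q = X + i * Y + Y.
  move=> hX hY; rewrite fD exprMn iq !fq //; ring.
have aq : alpha ^+ q = alpha + B by rewrite frob.
have bq : beta ^+ q = beta + D by rewrite frob.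
move: hab; rewrite mulf_eq0 negb_or => /andP [a0 b0].
have aqm1 : alpha ^+ (q - 1) * alpha = alpha ^+ q.
  by rewrite -exprSr subn1 prednK.
have aqp1 : alpha ^+ (q + 1) = alpha ^+ q * alpha by rewrite exprD expr1.
have Nlem : A ^+ 2 + A * B + B ^+ 2 * k + B = 0 -> alpha ^+ (q + 1) = B.
  move=> eqn; rewrite aqp1 aq /alpha.
  apply: (@eq_by _ _ _ (2 * (A ^+ 2 + A * B + i * A * B + i * B ^+ 2 + k * B ^+ 2)
      + B ^+ 2 * (i ^+ 2 - i - k) - (A ^+ 2 + A * B + B ^+ 2 * k + B))).
    by ring.
  by rewrite two0 hi2' eqn !mul0r mulr0 !subr0 addr0.
have trlem : B != 0 -> A ^+ 2 + A * B + B ^+ 2 * k + B = 0 ->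
    Tr m (1 + (alpha ^+ (q + 1))^-1) = m%:R + 1.
  move=> B0 eqn.
  rewrite Nlem //.
  set t := A / B.
  have tq : t ^+ q = t by rewrite /t exprMn exprVn !fq.
  have -> : 1 + B^-1 = 1 + (t ^+ 2 + t) + k.
    rewrite -addrA; congr (_ + _).
    apply: (@eq_by _ _ _ (2 * B^-1 - (A ^+ 2 + A * B + B ^+ 2 * k + B) / B ^+ 2)).
      by rewrite /t; field.
    by rewrite eqn two0 !mul0r subrr.
  rewrite (@TrD L two0 m (1 + _)) (@TrD L two0 m 1) Tr1 (@Trsq L two0) tq hTrk (@add2 L two0) addr0 //.
have natm : m%:R = (odd m)%:R :> L := @natr2 L two0 m.
split.
- move=> [om [hC' [hD' [eqn B0]]]].
  have hbeta : beta = alpha ^+ q + 1 by rewrite aq /beta hC' hD' /alpha; ring.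
  split.
    apply: (mulIf a0); rewrite aqm1 hbeta mulrDl -aqp1.
    by rewrite Nlem // mul1r aq addrC.
  split.
    rewrite /inFq -/q bq hD'; apply/negP => /eqP h.
    by move/negP: B0; apply; apply/eqP; apply: (addrI beta); rewrite addr0.
  split.
    by rewrite -/q trlem // natm om; exact: (@add2 L two0 1).
  rewrite aq bq hD'; apply: (@eq_by _ _ _ ((alpha+alpha) - (beta+beta))); first by ring.
  by rewrite (@add2 L two0 alpha) (@add2 L two0 beta) subr0.
- move=> [hbeta [nb [htr hsum]]].
  have DB : D = B.
    rewrite -/q in hsum.
    apply: (@eq_by _ _ _ ((beta + beta ^+ q) - (alpha + alpha ^+ q) + (alpha + alpha) - (beta + beta))).
      by rewrite aq bq; ring.
    by rewrite -hsum subrr add0r (@add2 L two0 alpha) (@add2 L two0 beta) subr0.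
  have B0 : B != 0.
    apply/negP => /eqP B0; move: nb; rewrite /inFq -/q bq DB B0 addr0 eqxx //.
  have hm : beta * alpha = alpha + B by rewrite hbeta aqm1 aq.
  set X := C * A + k * (B * B) + A + B.
  set Y := C * B + A * B + B * B + B.
  have XY : X + i * Y = 0.
    apply: (@eq_by _ _ _ (2 * (A + B + i * B) - B ^+ 2 * (i ^+ 2 - i - k)
       + (beta * alpha - (alpha + B)))).
      by rewrite /X /Y /beta /alpha DB; ring.
    by rewrite two0 hi2' hm subrr !mul0r mulr0 subr0 addr0.
  have fX : inFq m X := fqD _ _ (fqD _ _ (fqD _ _ (fqM _ _ hC hA) (fqM _ _ hk (fqM _ _ hB hB))) hA) hB.
  have fY : inFq m Y := fqD _ _ (fqD _ _ (fqD _ _ (fqM _ _ hC hB) (fqM _ _ hA hB)) (fqM _ _ hB hB)) hB.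
  have Y0 : Y = 0.
    have [Yz|Yn] := eqVneq Y 0; first by []. move: hi; rewrite /inFq -/q.
    have iY : i * Y = X.
      apply: (@eq_by _ _ _ (X + i * Y - 2 * X)); first by ring.
      by rewrite XY two0 mul0r subr0.
    have -> : i = X / Y by apply: (mulIf Yn); rewrite divfK.
    by rewrite exprMn exprVn !fq // eqxx.
  have X0 : X = 0 by move: XY; rewrite Y0 mulr0 addr0.
  have hC' : C = A + B + 1.
    apply: (mulIf B0).
    apply: (@eq_by _ _ _ (Y - 2 * (A * B + B * B + B))); first by rewrite /Y; ring.
    by rewrite Y0 two0 mul0r subr0.
  have eqn : A ^+ 2 + A * B + B ^+ 2 * k + B = 0.
    apply: (@eq_by _ _ _ (X - 2 * A)); first by rewrite /X hC'; ring.
    by rewrite X0 two0 mul0r subr0.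
  have om : odd m.
    move: htr; rewrite -/q trlem // natm; case: (odd m) => //=.
    by rewrite add0r => /eqP; rewrite oner_eq0.
  by [].
Qed.
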